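(* Let $\mathbb{k}$ be a field of characteristic $0$ containing a primitive $n$-th root of unity $\omega$, let $H=T_{n^2}(\omega)$ be the Taft Hopf algebra and $A=A_n(\omega)=\mathbb{k}[z]/(z^n-\omega)$ with $u$ the image of $z$. Let $A$ be the left $H$-module algebra with $g\cdot u=\omega u$ and $x\cdot u=1$, and the left $H$-comodule algebra via the algebra homomorphism $\rho:A\to H\otimes A$, $\rho(u)=\sum_{i=0}^{n-1}a_i\,x^ig^{-(i+1)}\otimes u^{i+1}$ where $a_i=(\omega-1)^i\omega^{i(i+1)/2}$. Then, for every $n$, $A$ is an object of the category ${}^H_H\mathcal{YD}$ of (left, left) Yetter–Drinfeld modules, i.e. for all $h\in H$ and $m\in A$, $$\sum h_1m_{-1}\otimes h_2\cdot m_0=\sum (h_1\cdot m)_{-1}h_2\otimes (h_1\cdot m)_0,$$ where $\rho(m)=\sum m_{-1}\otimes m_0$ and $\Delta(h)=\sum h_1\otimes h_2$.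
   Context: The Taft Hopf algebra is $H=T_{n^2}(\omega)=\mathbb{k}\langle x,g\mid x^n=0,\ g^n=1,\ xg=\omega gx\rangle$ with $\Delta(g)=g\otimes g$, $\Delta(x)=x\otimes 1+g\otimes x$, $\epsilon(g)=1$, $\epsilon(x)=0$, $S(g)=g^{-1}$, $S(x)=-g^{-1}x$. ''Module algebra'' means $h\cdot(ab)=\sum(h_1\cdot a)(h_2\cdot b)$ and $h\cdot 1=\epsilon(h)1$; so the action is determined by $g\cdot u=\omega u$, $x\cdot u=1$ (e.g. $x\cdot u^{i+1}=(\sum_{j=0}^i\omega^j)u^i$). $A$ is an $H$-comodule algebra via $\rho$, meaning $(\mathrm{id}\otimes\rho)\rho=(\Delta\otimes\mathrm{id})\rho$. *)

(* Defs.v *)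
From HB Require Import structures.
From mathcomp Require Import all_boot all_order all_algebra.
Set Implicit Arguments. Unset Strict Implicit. Unset Printing Implicit Defensive.
Import Order.TTheory GRing.Theory Num.Theory.
Local Open Scope ring_scope.

(* Concrete coordinate model of the Taft algebra H = T_{n^2}(w), of
   A = A_n(w) = k[z]/(z^n - w), and of the tensor products H(x)H, H(x)A.
   - An element of H is its coefficient vector on the basis g^a x^b
     (a, b < n), i.e. a {ffun 'I_n * 'I_n -> k}.
   - An element of A is its coefficient vector on the basis u^c (c < n).
   - An element of V (x) W (V, W with bases I, J) is a {ffun I * J -> k}. *)

Section Taft.
Variables (k : fieldType) (n : nat) (w : k).

Definition IH := ('I_n * 'I_n)%type.   (* (a,b) <-> g^a x^b *)
Definition H := {ffun IH -> k}.
Definition A := {ffun 'I_n -> k}.       (* c <-> u^c *)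

Definition sc (I : finType) (c : k) (v : {ffun I -> k}) : {ffun I -> k} :=
  [ffun i => c * v i].

Definition mulB (I : finType) (bp : I -> I -> {ffun I -> k})
  (p q : {ffun I -> k}) : {ffun I -> k} :=
  \sum_(i : I) \sum_(j : I) sc (p i * q j) (bp i j).

Definition tens (I J : finType) (v : {ffun I -> k}) (u : {ffun J -> k})
  : {ffun (I * J)%type -> k} := [ffun ij => v ij.1 * u ij.2].

Definition bpT (I J : finType) (bpI : I -> I -> {ffun I -> k})
  (bpJ : J -> J -> {ffun J -> k}) (i j : (I * J)%type) :=
  tens (bpI i.1 j.1) (bpJ i.2 j.2).

Definition powB (I : finType) (mul : {ffun I -> k} -> {ffun I -> k} -> {ffun I -> k})
  (one v : {ffun I -> k}) (m : nat) := iter m (mul v) one.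

(* basis vector g^a x^b of H (a taken mod n since g^n = 1; it is 0 when
   b >= n since x^n = 0) *)
Definition EH (a b : nat) : H :=
  [ffun ab : IH => ((ab.1 == (a %% n)%N :> nat) && (ab.2 == b :> nat))%:R].
Definition EHi (i : IH) : H := EH i.1 i.2.

(* x^b g^c = w^(b c) g^c x^b *)
Definition bpH (i j : IH) : H := sc (w ^+ (i.2 * j.1)) (EH (i.1 + j.1) (i.2 + j.2)).
Definition mulH := mulB bpH.
Definition oneH := EH 0 0.
Definition powH := powB mulH oneH.
Definition gH := EH 1 0.
Definition xH := EH 0 1.
Definition ginvH := EH (n - 1) 0.  (* g^{-1} = g^{n-1} *)

Definition EA (c : nat) : A := [ffun i : 'I_n => (i == c :> nat)%:R].
(* u^i u^j = u^(i+j), with u^n = w *)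
Definition bpA (i j : 'I_n) : A :=
  if (i + j < n)%N then EA (i + j) else sc w (EA (i + j - n)).
Definition mulA := mulB bpA.
Definition oneA := EA 0.
Definition powA := powB mulA oneA.
Definition uA := EA 1.

Definition mulHH := mulB (bpT bpH bpH).
Definition oneHH := tens oneH oneH.
Definition powHH := powB mulHH oneHH.
Definition mulHA := mulB (bpT bpH bpA).
Definition oneHA := tens oneH oneA.
Definition powHA := powB mulHA oneHA.

(* coproduct: the algebra map with Delta g = g(x)g, Delta x = x(x)1 + g(x)x *)
Definition DeltaB (i : IH) : {ffun (IH * IH)%type -> k} :=
  mulHH (powHH (tens gH gH) i.1) (powHH (tens xH oneH + tens gH xH) i.2).
Definition Delta (h : H) : {ffun (IH * IH)%type -> k} :=
  \sum_(i : IH) sc (h i) (DeltaB i).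

(* module-algebra action: g.u^c = w^c u^c, x.u^(i+1) = (sum_(j<=i) w^j) u^i,
   x.1 = 0; and g^a x^b . m = g^a.(x^b.m) *)
Definition actG (m : A) : A := \sum_(c : 'I_n) sc (m c) (sc (w ^+ c) (EA c)).
Definition actXB (c : nat) : A :=
  if c is i.+1 then sc (\sum_(j < i.+1) w ^+ j) (EA i) else 0.
Definition actX (m : A) : A := \sum_(c : 'I_n) sc (m c) (actXB c).
Definition act (h : H) (m : A) : A :=
  \sum_(i : IH) \sum_(c : 'I_n) sc (h i * m c) (iter i.1 actG (iter i.2 actX (EA c))).

(* comodule-algebra coaction: rho(u) = sum_i a_i x^i g^{-(i+1)} (x) u^(i+1),
   a_i = (w-1)^i w^(i(i+1)/2), extended as an algebra map *)
Definition coef_a (i : nat) : k := (w - 1) ^+ i * w ^+ (i * i.+1)./2.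
Definition rhou : {ffun (IH * 'I_n)%type -> k} :=
  \sum_(i < n) sc (coef_a i) (tens (mulH (powH xH i) (powH ginvH i.+1)) (powA uA i.+1)).
Definition rho (m : A) : {ffun (IH * 'I_n)%type -> k} :=
  \sum_(c : 'I_n) sc (m c) (powHA rhou c).

Definition YD_lhs (h : H) (m : A) : {ffun (IH * 'I_n)%type -> k} :=
  \sum_(pq : IH * IH) \sum_(rc : IH * 'I_n)
     sc (Delta h pq * rho m rc) (tens (mulH (EHi pq.1) (EHi rc.1)) (act (EHi pq.2) (EA rc.2))).
Definition YD_rhs (h : H) (m : A) : {ffun (IH * 'I_n)%type -> k} :=
  \sum_(pq : IH * IH) sc (Delta h pq)
     (\sum_(rc : IH * 'I_n)
        sc (rho (act (EHi pq.1) m) rc) (tens (mulH (EHi rc.1) (EHi pq.2)) (EA rc.2))).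

End Taft.

(* Main.v *)
Require Import Defs.
From mathcomp Require Import all_boot all_order all_algebra.
Import GRing.Theory.
Local Open Scope ring_scope.
From mathcomp Require Import ring zify.
Set Implicit Arguments. Unset Strict Implicit. Unset Printing Implicit Defensive.
Import Defs.

Section Gen.
Variable k : fieldType.

Definition ee (I : finType) (i : I) : {ffun I -> k} := [ffun j => (j == i)%:R].

Lemma scE (I : finType) c (v : {ffun I -> k}) i : sc c v i = c * v i.
Proof. by rewrite ffunE. Qed.

Lemma sc_sum (I J : finType) c (P : pred J) (F : J -> {ffun I -> k}) :
  sc c (\sum_(j | P j) F j) = \sum_(j | P j) sc c (F j).
Proof.
apply/ffunP=> x; rewrite ffunE !sum_ffunE mulr_sumr; apply: eq_bigr => j _.
by rewrite ffunE.
Qed.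

Lemma sc_suml (I J : finType) (P : pred J) (c : J -> k) (v : {ffun I -> k}) :
  sc (\sum_(j | P j) c j) v = \sum_(j | P j) sc (c j) v.
Proof.
apply/ffunP=> x; rewrite ffunE !sum_ffunE mulr_suml; apply: eq_bigr => j _.
by rewrite ffunE.
Qed.

Lemma scA (I : finType) a b (v : {ffun I -> k}) : sc a (sc b v) = sc (a * b) v.
Proof. by apply/ffunP=> x; rewrite !ffunE mulrA. Qed.

Lemma scDr (I : finType) a (u v : {ffun I -> k}) : sc a (u + v) = sc a u + sc a v.
Proof. by apply/ffunP=> x; rewrite !ffunE mulrDr. Qed.

Lemma scDl (I : finType) a b (v : {ffun I -> k}) : sc (a + b) v = sc a v + sc b v.
Proof. by apply/ffunP=> x; rewrite !ffunE mulrDl. Qed.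

Lemma scNr (I : finType) a (v : {ffun I -> k}) : sc a (- v) = - sc a v.
Proof. by apply/ffunP=> x; rewrite !ffunE mulrN. Qed.

Lemma scNl (I : finType) a (v : {ffun I -> k}) : sc (- a) v = - sc a v.
Proof. by apply/ffunP=> x; rewrite !ffunE mulNr. Qed.

Lemma sc1 (I : finType) (v : {ffun I -> k}) : sc 1 v = v.
Proof. by apply/ffunP=> x; rewrite !ffunE mul1r. Qed.

Lemma sc0 (I : finType) (v : {ffun I -> k}) : sc 0 v = 0.
Proof. by apply/ffunP=> x; rewrite !ffunE mul0r. Qed.

Lemma scr0 (I : finType) a : sc a (0 : {ffun I -> k}) = 0.
Proof. by apply/ffunP=> x; rewrite !ffunE mulr0. Qed.

Lemma eeE (I : finType) (i j : I) : ee i j = (j == i)%:R.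
Proof. by rewrite ffunE. Qed.

Lemma sum_ee (I : finType) (F : I -> k) (i : I) : \sum_j F j * ee i j = F i.
Proof.
rewrite (bigD1 i) //= [X in _ + X]big1 ?addr0; first by rewrite eeE eqxx mulr1.
by move=> j /negbTE ji; rewrite eeE ji mulr0.
Qed.

Lemma sum_ee' (I : finType) (F : I -> k) (i : I) : \sum_j ee j i * F j = F i.
Proof.
rewrite (bigD1 i) //= [X in _ + X]big1 ?addr0; first by rewrite eeE eqxx mul1r.
by move=> j /negbTE ji; rewrite eeE eq_sym ji mul0r.
Qed.

Lemma decomp (I : finType) (v : {ffun I -> k}) : v = \sum_i sc (v i) (ee i).
Proof.
apply/ffunP=> x; rewrite sum_ffunE -[LHS](sum_ee' v x).
by apply: eq_bigr => i _; rewrite scE mulrC.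
Qed.

Lemma mulBE (I : finType) bp (p q : {ffun I -> k}) x :
  mulB bp p q x = \sum_i \sum_j p i * q j * bp i j x.
Proof.
rewrite /mulB sum_ffunE; apply: eq_bigr => i _; rewrite sum_ffunE.
by apply: eq_bigr => j _; rewrite ffunE.
Qed.

Lemma mulB_ee (I : finType) bp (i j : I) : mulB bp (ee i) (ee j) = bp i j.
Proof.
apply/ffunP=> x; rewrite mulBE.
rewrite (bigD1 i) //= [X in _ + X]big1 ?addr0; last first.
  by move=> l /negbTE li; apply: big1 => m _; rewrite eeE li !mul0r.
rewrite (bigD1 j) //= [X in _ + X]big1 ?addr0; first by rewrite !eeE !eqxx !mul1r.
by move=> l /negbTE li; rewrite !eeE li mulr0 mul0r.
Qed.

Lemma mulB_suml (I J : finType) bp (P : pred J) (F : J -> {ffun I -> k}) q :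
  mulB bp (\sum_(j | P j) F j) q = \sum_(j | P j) mulB bp (F j) q.
Proof.
apply/ffunP=> x; rewrite [LHS]mulBE [RHS]sum_ffunE.
under [RHS]eq_bigr do rewrite mulBE.
transitivity (\sum_i \sum_j \sum_(l | P l) F l i * q j * bp i j x).
  by apply: eq_bigr => i _; apply: eq_bigr => j _; rewrite sum_ffunE !mulr_suml.
rewrite [RHS]exchange_big /=; apply: eq_bigr => i _.
by rewrite [RHS]exchange_big.
Qed.

Lemma mulB_sumr (I J : finType) bp (P : pred J) (F : J -> {ffun I -> k}) q :
  mulB bp q (\sum_(j | P j) F j) = \sum_(j | P j) mulB bp q (F j).
Proof.
apply/ffunP=> x; rewrite [LHS]mulBE [RHS]sum_ffunE.
under [RHS]eq_bigr do rewrite mulBE.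
transitivity (\sum_i \sum_j \sum_(l | P l) q i * F l j * bp i j x).
  by apply: eq_bigr => i _; apply: eq_bigr => j _; rewrite sum_ffunE mulr_sumr !mulr_suml.
rewrite [RHS]exchange_big /=; apply: eq_bigr => i _.
by rewrite [RHS]exchange_big.
Qed.

Lemma mulB_scl (I : finType) bp c (p q : {ffun I -> k}) :
  mulB bp (sc c p) q = sc c (mulB bp p q).
Proof.
apply/ffunP=> x; rewrite ffunE !mulBE mulr_sumr; apply: eq_bigr => i _.
rewrite mulr_sumr; apply: eq_bigr => j _; rewrite ffunE; ring.
Qed.

Lemma mulB_scr (I : finType) bp c (p q : {ffun I -> k}) :
  mulB bp p (sc c q) = sc c (mulB bp p q).
Proof.
apply/ffunP=> x; rewrite ffunE !mulBE mulr_sumr; apply: eq_bigr => i _.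
rewrite mulr_sumr; apply: eq_bigr => j _; rewrite ffunE; ring.
Qed.

Lemma mulB_addl (I : finType) bp (p q r : {ffun I -> k}) :
  mulB bp (p + q) r = mulB bp p r + mulB bp q r.
Proof.
apply/ffunP=> x; rewrite ffunE !mulBE -big_split; apply: eq_bigr => i _.
by rewrite -big_split; apply: eq_bigr => j _; rewrite ffunE !mulrDl.
Qed.

Lemma mulB_addr (I : finType) bp (p q r : {ffun I -> k}) :
  mulB bp r (p + q) = mulB bp r p + mulB bp r q.
Proof.
apply/ffunP=> x; rewrite ffunE !mulBE -big_split; apply: eq_bigr => i _.
by rewrite -big_split; apply: eq_bigr => j _; rewrite ffunE !mulrDr !mulrDl.
Qed.

Lemma mulB_0l (I : finType) bp (p : {ffun I -> k}) : mulB bp 0 p = 0.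
Proof.
apply/ffunP=> x; rewrite mulBE ffunE big1 // => i _.
by rewrite big1 // => j _; rewrite ffunE !mul0r.
Qed.
Lemma mulB_0r (I : finType) bp (p : {ffun I -> k}) : mulB bp p 0 = 0.
Proof.
apply/ffunP=> x; rewrite mulBE ffunE big1 // => i _.
by rewrite big1 // => j _; rewrite ffunE !mulr0 mul0r.
Qed.
Lemma mulB_Nl (I : finType) bp (p q : {ffun I -> k}) : mulB bp (- p) q = - mulB bp p q.
Proof.
have -> : - p = sc (-1) p by apply/ffunP=> x; rewrite !ffunE mulN1r.
by rewrite mulB_scl scNl sc1.
Qed.
Lemma mulB_Nr (I : finType) bp (p q : {ffun I -> k}) : mulB bp q (- p) = - mulB bp q p.
Proof.
have -> : - p = sc (-1) p by apply/ffunP=> x; rewrite !ffunE mulN1r.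
by rewrite mulB_scr scNl sc1.
Qed.
Lemma mulB_subl (I : finType) bp (p q r : {ffun I -> k}) :
  mulB bp (p - q) r = mulB bp p r - mulB bp q r.
Proof. by rewrite mulB_addl mulB_Nl. Qed.
Lemma mulB_subr (I : finType) bp (p q r : {ffun I -> k}) :
  mulB bp r (p - q) = mulB bp r p - mulB bp r q.
Proof. by rewrite mulB_addr mulB_Nr. Qed.

Lemma mulB_dec (I : finType) bp (p q : {ffun I -> k}) :
  mulB bp p q = \sum_i \sum_j sc (p i * q j) (mulB bp (ee i) (ee j)).
Proof.
rewrite {1}(decomp p) mulB_suml; apply: eq_bigr => i _.
rewrite mulB_scl {1}(decomp q) mulB_sumr sc_sum; apply: eq_bigr => j _.
by rewrite mulB_scr scA mulrC.
Qed.

Lemma mulB_decl (I : finType) bp (p r : {ffun I -> k}) :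
  mulB bp p r = \sum_i sc (p i) (mulB bp (ee i) r).
Proof.
rewrite {1}(decomp p) mulB_suml; apply: eq_bigr => i _; by rewrite mulB_scl.
Qed.

Lemma mulB_decr (I : finType) bp (p r : {ffun I -> k}) :
  mulB bp p r = \sum_i sc (r i) (mulB bp p (ee i)).
Proof.
rewrite {1}(decomp r) mulB_sumr; apply: eq_bigr => i _; by rewrite mulB_scr.
Qed.

Lemma mulB_assoc (I : finType) bp :
  (forall i j l : I, mulB bp (bp i j) (ee l) = mulB bp (ee i) (bp j l)) ->
  associative (mulB bp).
Proof.
move=> H p q r.
have E1 : mulB bp (mulB bp p q) r =
   \sum_i \sum_j \sum_l sc (p i * q j * r l) (mulB bp (bp i j) (ee l)).
  rewrite [mulB bp p q]/mulB mulB_suml; apply: eq_bigr => i _.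
  rewrite mulB_suml; apply: eq_bigr => j _.
  rewrite mulB_scl (mulB_decr _ (bp i j)) sc_sum; apply: eq_bigr => l _.
  by rewrite scA mulrC.
have E2 : mulB bp p (mulB bp q r) =
   \sum_j \sum_l \sum_i sc (p i * q j * r l) (mulB bp (ee i) (bp j l)).
  rewrite [mulB bp q r]/mulB mulB_sumr; apply: eq_bigr => j _.
  rewrite mulB_sumr; apply: eq_bigr => l _.
  rewrite mulB_scr (mulB_decl _ _ (bp j l)) sc_sum; apply: eq_bigr => i _.
  by rewrite scA mulrC mulrA.
rewrite E1 E2; symmetry; rewrite [LHS]exchange_big /=; apply: eq_bigr => j _.
rewrite [LHS]exchange_big /=; apply: eq_bigr => l _.
by apply: eq_bigr => i _; rewrite H.
Qed.

Lemma mulB_unitl (I : finType) bp (o : {ffun I -> k}) :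
  (forall i, mulB bp o (ee i) = ee i) -> forall x, mulB bp o x = x.
Proof.
move=> H x; rewrite mulB_decr [RHS]decomp; apply: eq_bigr => i _; by rewrite H.
Qed.

Lemma mulB_unitr (I : finType) bp (o : {ffun I -> k}) :
  (forall i, mulB bp (ee i) o = ee i) -> forall x, mulB bp x o = x.
Proof.
move=> H x; rewrite mulB_decl [RHS]decomp; apply: eq_bigr => i _; by rewrite H.
Qed.

Lemma tensE (I J : finType) (v : {ffun I -> k}) (u : {ffun J -> k}) ij :
  tens v u ij = v ij.1 * u ij.2.
Proof. by rewrite ffunE. Qed.

Lemma tens_ee (I J : finType) (i : I) (j : J) : tens (ee i) (ee j) = ee (i, j).
Proof.
apply/ffunP=> [[x y]]; rewrite !ffunE /= -natrM; congr (_%:R).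
by rewrite xpair_eqE; case: (x == i); case: (y == j).
Qed.

Lemma tens_scl (I J : finType) c (v : {ffun I -> k}) (u : {ffun J -> k}) :
  tens (sc c v) u = sc c (tens v u).
Proof. by apply/ffunP=> x; rewrite !ffunE mulrA. Qed.
Lemma tens_scr (I J : finType) c (v : {ffun I -> k}) (u : {ffun J -> k}) :
  tens v (sc c u) = sc c (tens v u).
Proof. by apply/ffunP=> x; rewrite !ffunE mulrCA. Qed.
Lemma tens_addl (I J : finType) (v v' : {ffun I -> k}) (u : {ffun J -> k}) :
  tens (v + v') u = tens v u + tens v' u.
Proof. by apply/ffunP=> x; rewrite !ffunE mulrDl. Qed.
Lemma tens_addr (I J : finType) (v : {ffun I -> k}) (u u' : {ffun J -> k}) :
  tens v (u + u') = tens v u + tens v u'.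
Proof. by apply/ffunP=> x; rewrite !ffunE mulrDr. Qed.
Lemma tens_0l (I J : finType) (u : {ffun J -> k}) : tens (0 : {ffun I -> k}) u = 0.
Proof. by apply/ffunP=> x; rewrite !ffunE mul0r. Qed.
Lemma tens_0r (I J : finType) (v : {ffun I -> k}) : tens v (0 : {ffun J -> k}) = 0.
Proof. by apply/ffunP=> x; rewrite !ffunE mulr0. Qed.
Lemma tens_suml (I J L : finType) (P : pred L) (F : L -> {ffun I -> k}) (u : {ffun J -> k}) :
  tens (\sum_(l | P l) F l) u = \sum_(l | P l) tens (F l) u.
Proof.
apply/ffunP=> x; rewrite !ffunE !sum_ffunE mulr_suml.
by apply: eq_bigr => l _; rewrite ffunE.
Qed.
Lemma tens_sumr (I J L : finType) (P : pred L) (F : L -> {ffun J -> k}) (v : {ffun I -> k}) :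
  tens v (\sum_(l | P l) F l) = \sum_(l | P l) tens v (F l).
Proof.
apply/ffunP=> x; rewrite !ffunE !sum_ffunE mulr_sumr.
by apply: eq_bigr => l _; rewrite ffunE.
Qed.

Lemma mulB_tens (I J : finType) bI bJ (a c : {ffun I -> k}) (b d : {ffun J -> k}) :
  mulB (bpT bI bJ) (tens a b) (tens c d) = tens (mulB bI a c) (mulB bJ b d).
Proof.
apply/ffunP=> [[x y]]; rewrite [LHS]mulBE [RHS]tensE /= !mulBE.
symmetry.
transitivity (\sum_(i1 : I) \sum_(j1 : I) \sum_(i2 : J) \sum_(j2 : J)
   a i1 * c j1 * bI i1 j1 x * (b i2 * d j2 * bJ i2 j2 y)).
  rewrite mulr_suml; apply: eq_bigr => i1 _.
  rewrite mulr_suml; apply: eq_bigr => j1 _.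
  rewrite mulr_sumr; apply: eq_bigr => i2 _.
  by rewrite mulr_sumr.
transitivity (\sum_(i1 : I) \sum_(i2 : J) \sum_(j1 : I) \sum_(j2 : J)
   a i1 * c j1 * bI i1 j1 x * (b i2 * d j2 * bJ i2 j2 y)).
  by apply: eq_bigr => i1 _; rewrite exchange_big.
rewrite pair_bigA /=; apply: eq_bigr => [[i1 i2]] _ /=.
rewrite pair_bigA /=; apply: eq_bigr => [[j1 j2]] _ /=.
by rewrite /bpT !tensE /=; ring.
Qed.

Lemma bpT_assoc (I J : finType) bI bJ :
  associative (mulB bI) -> associative (mulB bJ) ->
  associative (mulB (@bpT k I J bI bJ)).
Proof.
move=> AI AJ; apply: mulB_assoc => i j l.
case: i => i1 i2; case: j => j1 j2; case: l => l1 l2.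
rewrite /bpT /= -!tens_ee !mulB_tens.
rewrite -(mulB_ee bI i1 j1) -(mulB_ee bI j1 l1) -(mulB_ee bJ i2 j2) -(mulB_ee bJ j2 l2).
by rewrite AI AJ.
Qed.

Definition Lf (I J : finType) (f : I -> {ffun J -> k}) (m : {ffun I -> k}) :=
  \sum_c sc (m c) (f c).

Lemma sum_scee (I J : finType) (F : I -> {ffun J -> k}) (j : I) :
  \sum_i sc (ee j i) (F i) = F j.
Proof.
rewrite (bigD1 j) //= [X in _ + X]big1 ?addr0; first by rewrite eeE eqxx sc1.
by move=> i /negbTE ij; rewrite eeE ij sc0.
Qed.

Lemma Lf_ee (I J : finType) (f : I -> {ffun J -> k}) i : Lf f (ee i) = f i.
Proof. exact: sum_scee. Qed.

Lemma Lf_sc (I J : finType) (f : I -> {ffun J -> k}) c m : Lf f (sc c m) = sc c (Lf f m).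
Proof. by rewrite /Lf sc_sum; apply: eq_bigr => i _; rewrite scE scA. Qed.

Lemma Lf_add (I J : finType) (f : I -> {ffun J -> k}) m m' :
  Lf f (m + m') = Lf f m + Lf f m'.
Proof. by rewrite /Lf -big_split; apply: eq_bigr => i _; rewrite ffunE scDl. Qed.

Lemma Lf_sum (I J L : finType) (f : I -> {ffun J -> k}) (P : pred L) (F : L -> {ffun I -> k}) :
  Lf f (\sum_(l | P l) F l) = \sum_(l | P l) Lf f (F l).
Proof.
rewrite /Lf exchange_big /=; apply: eq_bigr => i _.
by rewrite sum_ffunE sc_suml.
Qed.

Lemma Lf_0 (I J : finType) (f : I -> {ffun J -> k}) : Lf f 0 = 0.
Proof. by rewrite /Lf big1 // => i _; rewrite ffunE sc0. Qed.

Lemma Lf_N (I J : finType) (f : I -> {ffun J -> k}) m : Lf f (- m) = - Lf f m.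
Proof.
rewrite /Lf -sumrN; apply: eq_bigr => i _; by rewrite ffunE scNl.
Qed.

Lemma Lf_sub (I J : finType) (f : I -> {ffun J -> k}) m m' :
  Lf f (m - m') = Lf f m - Lf f m'.
Proof. by rewrite Lf_add Lf_N. Qed.

Definition islin (I J : finType) (g : {ffun I -> k} -> {ffun J -> k}) :=
  (forall c v, g (sc c v) = sc c (g v)) /\
  (forall (F : I -> {ffun I -> k}), g (\sum_i F i) = \sum_i g (F i)).

Lemma lin_ext (I J : finType) (g : {ffun I -> k} -> {ffun J -> k}) :
  islin g -> forall m, g m = Lf (fun i => g (ee i)) m.
Proof.
move=> [H1 H2] m; rewrite {1}(decomp m) H2; apply: eq_bigr => i _; by rewrite H1.
Qed.

Lemma lin_eq (I J : finType) (g g' : {ffun I -> k} -> {ffun J -> k}) :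
  islin g -> islin g' -> (forall i, g (ee i) = g' (ee i)) -> forall m, g m = g' m.
Proof.
move=> L L' E m; rewrite (lin_ext L) (lin_ext L'); apply: eq_bigr => i _; by rewrite E.
Qed.

Lemma islin_Lf (I J : finType) (f : I -> {ffun J -> k}) : islin (Lf f).
Proof. split; [exact: Lf_sc | move=> F; exact: Lf_sum]. Qed.

Lemma islin_comp (I J L : finType) (g : {ffun I -> k} -> {ffun J -> k})
  (g' : {ffun J -> k} -> {ffun L -> k}) : islin g -> islin g' -> islin (g' \o g).
Proof.
move=> [A1 A2] [B1 B2]; split=> [c v|F] /=; first by rewrite A1 B1.
rewrite A2; rewrite (lin_ext (conj B1 B2)) Lf_sum; apply: eq_bigr => i _.
by rewrite -(lin_ext (conj B1 B2)).
Qed.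

Lemma islin_mulBl (I : finType) bp (q : {ffun I -> k}) : islin (mulB bp ^~ q).
Proof. split=> [c v|F]; [exact: mulB_scl | exact: mulB_suml]. Qed.
Lemma islin_mulBr (I : finType) bp (q : {ffun I -> k}) : islin (mulB bp q).
Proof. split=> [c v|F]; [exact: mulB_scr | exact: mulB_sumr]. Qed.
Lemma islin_tensl (I J : finType) (u : {ffun J -> k}) : islin (fun v : {ffun I -> k} => tens v u).
Proof. split=> [c v|F]; [exact: tens_scl | exact: tens_suml]. Qed.
Lemma islin_tensr (I J : finType) (v : {ffun I -> k}) : islin (fun u : {ffun J -> k} => tens v u).
Proof. split=> [c u|F]; [exact: tens_scr | exact: tens_sumr]. Qed.

Lemma islin_add (I J : finType) (g : {ffun I -> k} -> {ffun J -> k}) :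
  islin g -> forall u v, g (u + v) = g u + g v.
Proof.
move=> L u v; rewrite !(lin_ext L) -Lf_add //.
Qed.

Lemma islin_sub (I J : finType) (g : {ffun I -> k} -> {ffun J -> k}) :
  islin g -> forall u v, g (u - v) = g u - g v.
Proof. move=> L u v; rewrite !(lin_ext L) -Lf_sub //. Qed.

Lemma islin_0 (I J : finType) (g : {ffun I -> k} -> {ffun J -> k}) : islin g -> g 0 = 0.
Proof. move=> L; rewrite (lin_ext L) Lf_0 //. Qed.

Lemma islin_sum (I J L : finType) (g : {ffun I -> k} -> {ffun J -> k}) :
  islin g -> forall (P : pred L) (F : L -> {ffun I -> k}), g (\sum_(l | P l) F l) = \sum_(l | P l) g (F l).
Proof.
move=> Lg P F; rewrite (lin_ext Lg) Lf_sum; apply: eq_bigr => l _; by rewrite -(lin_ext Lg).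
Qed.

Lemma islin_sc (I J : finType) (g : {ffun I -> k} -> {ffun J -> k}) :
  islin g -> forall c v, g (sc c v) = sc c (g v).
Proof. by case. Qed.

Lemma bilin_eq (I J L : finType) (F G : {ffun I -> k} -> {ffun J -> k} -> {ffun L -> k}) :
  (forall b, islin (F ^~ b)) -> (forall a, islin (F a)) ->
  (forall b, islin (G ^~ b)) -> (forall a, islin (G a)) ->
  (forall i j, F (ee i) (ee j) = G (ee i) (ee j)) -> forall a b, F a b = G a b.
Proof.
move=> F1 F2 G1 G2 E a b.
apply: (lin_eq (g := F^~ b) (g' := G^~ b)) => // i.
by apply: (lin_eq (F2 (ee i)) (G2 (ee i))).
Qed.

Lemma islin_addf (I J : finType) (g g' : {ffun I -> k} -> {ffun J -> k}) :
  islin g -> islin g' -> islin (fun x => g x + g' x).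
Proof.
move=> [A1 A2] [B1 B2]; split=> [c v|F]; first by rewrite A1 B1 scDr.
by rewrite A2 B2 big_split.
Qed.

Lemma islin_scf (I J : finType) (g : {ffun I -> k} -> {ffun J -> k}) c :
  islin g -> islin (fun x => sc c (g x)).
Proof.
move=> [A1 A2]; split=> [d v|F]; first by rewrite A1 !scA mulrC.
by rewrite A2 sc_sum.
Qed.

Lemma islin_id (I : finType) : islin (fun x : {ffun I -> k} => x).
Proof. by split. Qed.

Lemma islin_iter (I : finType) (g : {ffun I -> k} -> {ffun I -> k}) m :
  islin g -> islin (iter m g).
Proof.
move=> L; elim: m => [|m IH] /=; first exact: islin_id.
exact: (islin_comp IH L).
Qed.

Lemma islin_Nf (I J : finType) (g : {ffun I -> k} -> {ffun J -> k}) :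
  islin g -> islin (fun x => - g x).
Proof.
move=> [A1 A2]; split=> [d v|F]; first by rewrite A1 scNr.
by rewrite A2 sumrN.
Qed.

Lemma islin_subf (I J : finType) (g g' : {ffun I -> k} -> {ffun J -> k}) :
  islin g -> islin g' -> islin (fun x => g x - g' x).
Proof. move=> L L'; exact: (islin_addf L (islin_Nf L')). Qed.

Lemma islin_const0 (I J : finType) : islin (fun _ : {ffun I -> k} => (0 : {ffun J -> k})).
Proof. by split=> [c v|F]; rewrite ?scr0 ?big1. Qed.

Lemma islin_sumf (I J L : finType) (c : L -> k) (g : L -> {ffun I -> k} -> {ffun J -> k}) :
  (forall l, islin (g l)) -> islin (fun x => \sum_l sc (c l) (g l x)).
Proof.
move=> Lg; split=> [d v|F].
  rewrite sc_sum; apply: eq_bigr => l _; by rewrite (islin_sc (Lg l)) !scA mulrC.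
rewrite exchange_big /=; apply: eq_bigr => l _; by rewrite (islin_sum (Lg l)) sc_sum.
Qed.

End Gen.
Arguments ee {k I} i.
Arguments Lf {k I J} f m.
Arguments islin {k I J} g.

Section Taft.
Variables (k : fieldType) (n : nat) (w : k).
Hypothesis n_gt1 : (1 < n)%N.
Hypothesis wn : w ^+ n = 1.
Hypothesis qsum0 : \sum_(j < n) w ^+ j = 0.

Local Notation mH := (@Defs.mulH k n w).
Local Notation mA := (@Defs.mulA k n w).
Local Notation mHA := (@Defs.mulHA k n w).
Local Notation mHH := (@Defs.mulHH k n w).
Local Notation EH := (Defs.EH k n).
Local Notation EA := (Defs.EA k n).
Local Notation oH := (Defs.oneH k n).
Local Notation oA := (Defs.oneA k n).

Lemma npos : (0 < n)%N. Proof. exact: ltnW. Qed.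

Lemma wmod i : w ^+ (i %% n) = w ^+ i. Proof. exact: expr_mod. Qed.

Lemma EH_ge a b : (n <= b)%N -> EH a b = 0.
Proof.
move=> nb; apply/ffunP=> [[x y]]; rewrite !ffunE /=.
have /negbTE -> : (y : nat) != b by rewrite neq_ltn (leq_trans (ltn_ord y) nb).
by rewrite andbF.
Qed.

Lemma EH_mod a b : EH (a %% n) b = EH a b.
Proof. by apply/ffunP=> x; rewrite !ffunE modn_mod. Qed.

Lemma EH_modE a a1 b : a = a1 %[mod n] -> EH a b = EH a1 b.
Proof. by move=> E; rewrite -EH_mod E EH_mod. Qed.

Lemma EHi_ee (i : IH n) : EHi k i = ee i.
Proof.
case: i => [[a Ha] [b Hb]]; apply/ffunP=> [[[x Hx] [y Hy]]].
rewrite !ffunE /= modn_small //.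

Qed.

Lemma EH_ee a b (Ha : (a < n)%N) (Hb : (b < n)%N) :
  EH a b = ee ((Ordinal Ha, Ordinal Hb) : IH n).
Proof. by rewrite -EHi_ee. Qed.

Lemma mulH_EH a b c d :
  mH (EH a b) (EH c d) = sc (w ^+ (b * c)) (EH (a + c) (b + d)).
Proof.
rewrite /mulH.
case: (ltnP b n) => Hb; last by rewrite EH_ge // mulB_0l EH_ge ?scr0 // (leq_trans Hb) ?leq_addr.
case: (ltnP d n) => Hd; last by rewrite (EH_ge c Hd) mulB_0r EH_ge ?scr0 // (leq_trans Hd) ?leq_addl.
rewrite -(EH_mod a) -(EH_mod c).
have Ha := ltn_pmod a npos; have Hc := ltn_pmod c npos.
rewrite (EH_ee Ha Hb) (EH_ee Hc Hd) mulB_ee /bpH /=.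
rewrite -wmod modnMmr wmod; congr sc.
by apply: EH_modE; rewrite modnDm.
Qed.

Lemma mulH_assoc : associative (mH).
Proof.
apply: mulB_assoc => i j l.
rewrite /bpH -!EHi_ee /EHi mulB_scl mulB_scr -/(@Defs.mulH k n w) !mulH_EH !scA -!exprD.
congr sc; last by rewrite !addnA.
congr (w ^+ _); ring.
Qed.

Lemma mulH1 h : mH h oH = h.
Proof.
apply: mulB_unitr => i; change (mH (ee i) oH = ee i); rewrite -EHi_ee /EHi /oneH mulH_EH !addn0 muln0 sc1 //.
Qed.

Lemma mul1H h : mH oH h = h.
Proof.
apply: mulB_unitl => i; change (mH oH (ee i) = ee i); rewrite -EHi_ee /EHi /oneH mulH_EH !add0n mul0n sc1 //.
Qed.

Definition EAs (s : nat) : A k n := sc (w ^+ (s %/ n)) (EA (s %% n)).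

Lemma EA_ee (i : 'I_n) : EA i = ee i.
Proof. by apply/ffunP=> j; rewrite !ffunE. Qed.

Lemma EAs_small c : (c < n)%N -> EAs c = EA c.
Proof. by move=> H; rewrite /EAs divn_small // modn_small // expr0 sc1. Qed.

Lemma EAs_add (s q : nat) : EAs (s + q * n)%N = sc (w ^+ q) (EAs s).
Proof.
rewrite /EAs scA -exprD addnC divnMDl ?npos // modnMDl; congr sc; congr (w ^+ _).
Qed.

Lemma EAs_ee s (Hs : (s %% n < n)%N) : EAs s = sc (w ^+ (s %/ n)) (ee (Ordinal Hs)).
Proof. by rewrite /EAs -EA_ee. Qed.

Lemma bpA_EAs (i j : 'I_n) : bpA w i j = EAs (i + j)%N.
Proof.
rewrite /bpA; case: ifP => H.
  by rewrite EAs_small.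
have Hi := ltn_ord i; have Hj := ltn_ord j.
have H1 : (i + j = (i + j - n) + 1 * n)%N by move/negbT: H; lia.
have Hlt : (i + j - n < n)%N by lia.
by rewrite [in RHS]H1 EAs_add expr1 (EAs_small Hlt).
Qed.

Lemma mulA_EAs (s t : nat) : mA (EAs s) (EAs t) = EAs (s + t)%N.
Proof.
have Hs := ltn_pmod s npos; have Ht := ltn_pmod t npos.
rewrite (EAs_ee Hs) (EAs_ee Ht) /Defs.mulA mulB_scl mulB_scr mulB_ee bpA_EAs /= scA.
have -> : (s + t = (s %% n + t %% n) + (s %/ n + t %/ n) * n)%N.
  by rewrite {1}(divn_eq s n) {1}(divn_eq t n) mulnDl; lia.
by rewrite EAs_add -exprD addnC.
Qed.

Lemma mulA_assoc : associative mA.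
Proof.
apply: mulB_assoc => i j l.
rewrite !bpA_EAs -!EA_ee -!EAs_small // -/(@Defs.mulA k n w) !mulA_EAs addnA //.
Qed.

Lemma oA_EAs : oA = EAs 0.
Proof. by rewrite EAs_small ?npos. Qed.

Lemma mul1A a : mA oA a = a.
Proof.
apply: mulB_unitl => i; change (mA oA (ee i) = ee i).
by rewrite -EA_ee -EAs_small // oA_EAs mulA_EAs.
Qed.

Lemma mulA1 a : mA a oA = a.
Proof.
apply: mulB_unitr => i; change (mA (ee i) oA = ee i).
by rewrite -EA_ee -EAs_small // oA_EAs mulA_EAs addn0.
Qed.

Lemma mulHA_assoc : associative mHA.
Proof. apply: bpT_assoc; [exact: mulH_assoc | exact: mulA_assoc]. Qed.

Lemma mulHH_assoc : associative mHH.
Proof. apply: bpT_assoc; exact: mulH_assoc. Qed.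

Lemma mulHA_tens a b c d : mHA (tens a b) (tens c d) = tens (mH a c) (mA b d).
Proof. exact: mulB_tens. Qed.

Lemma mulHH_tens a b c d : mHH (tens a b) (tens c d) = tens (mH a c) (mH b d).
Proof. exact: mulB_tens. Qed.

Lemma mul1HA x : mHA (oneHA k n) x = x.
Proof.
apply: mulB_unitl => [[i j]]; rewrite -tens_ee.
by rewrite -/(@Defs.mulHA k n w) /oneHA mulHA_tens mul1H mul1A.
Qed.

Lemma mulHA1 x : mHA x (oneHA k n) = x.
Proof.
apply: mulB_unitr => [[i j]]; rewrite -tens_ee.
by rewrite -/(@Defs.mulHA k n w) /oneHA mulHA_tens mulH1 mulA1.
Qed.

Lemma mul1HH x : mHH (oneHH k n) x = x.
Proof.
apply: mulB_unitl => [[i j]]; rewrite -tens_ee.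
by rewrite -/(@Defs.mulHH k n w) /oneHH mulHH_tens !mul1H.
Qed.

Lemma mulHH1 x : mHH x (oneHH k n) = x.
Proof.
apply: mulB_unitr => [[i j]]; rewrite -tens_ee.
by rewrite -/(@Defs.mulHH k n w) /oneHH mulHH_tens !mulH1.
Qed.

Definition qn (s : nat) : k := \sum_(j < s) w ^+ j.

Lemma qn0 : qn 0 = 0. Proof. by rewrite /qn big_ord0. Qed.

Lemma qnD (a b : nat) : qn (a + b)%N = qn a + w ^+ a * qn b.
Proof.
rewrite /qn big_split_ord /=; congr (_ + _).
by rewrite mulr_sumr; apply: eq_bigr => j _; rewrite exprD.
Qed.

Lemma qnS (a : nat) : qn a.+1 = 1 + w * qn a.
Proof. by rewrite -add1n qnD /qn big_ord1 expr1 expr0. Qed.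

Lemma qnn : qn n = 0. Proof. exact: qsum0. Qed.

Lemma qn_addn (a q : nat) : qn (a + q * n)%N = qn a.
Proof.
elim: q => [|q IH]; first by rewrite mul0n addn0.
have -> : (a + q.+1 * n = (a + q * n) + n)%N by rewrite mulSn; lia.
by rewrite qnD qnn mulr0 addr0 IH.
Qed.

Lemma qn_mod (a : nat) : qn (a %% n) = qn a.
Proof. by rewrite {2}(divn_eq a n) addnC qn_addn. Qed.

Local Notation aG := (@actG k n w).
Local Notation aX := (@actX k n w).
Local Notation act := (@Defs.act k n w).

Lemma actG_Lf m : aG m = Lf (fun c : 'I_n => sc (w ^+ c) (EA c)) m.
Proof. by []. Qed.

Lemma actX_Lf m : aX m = Lf (fun c : 'I_n => actXB n w c) m.
Proof. by []. Qed.

Lemma islin_aG : islin aG.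
Proof. have := @islin_Lf k _ _ (fun c : 'I_n => sc (w ^+ c) (EA c)). by []. Qed.

Lemma islin_aX : islin aX.
Proof. have := @islin_Lf k _ _ (fun c : 'I_n => actXB n w c). by []. Qed.

Lemma aG_EAs (s : nat) : aG (EAs s) = sc (w ^+ s) (EAs s).
Proof.
have Hs := ltn_pmod s npos.
rewrite (EAs_ee Hs) (islin_sc islin_aG) actG_Lf Lf_ee /= -EA_ee scA scA /=.
by rewrite wmod mulrC.
Qed.

Lemma aX_EAs (s : nat) : aX (EAs s) = sc (qn s) (EAs (s.-1)%N).
Proof.
have Hs := ltn_pmod s npos.
rewrite (EAs_ee Hs) (islin_sc islin_aX) actX_Lf Lf_ee /= -qn_mod.
have Es : s = ((s %% n) + (s %/ n) * n)%N by rewrite addnC -divn_eq.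
move: Hs Es; case: (s %% n)%N => [|r] Hs Es /=.
  by rewrite qn0 sc0 scr0.
have -> : (s.-1 = r + (s %/ n) * n)%N by rewrite {1}Es.
rewrite EAs_add EAs_small ?scA; last by apply: ltnW.
by rewrite mulrC.
Qed.

Lemma aX_EA0 : aX (EA 0) = 0.
Proof. by rewrite -EAs_small ?npos // aX_EAs qn0 sc0. Qed.

Lemma aG_EA0 : aG (EA 0) = EA 0.
Proof. by rewrite -EAs_small ?npos // aG_EAs expr0 sc1. Qed.

Lemma iter_aG_n m : iter n aG m = m.
Proof.
have L := islin_iter n islin_aG.
move: m; apply: (lin_eq L (@islin_id k _)) => c.
have E : forall j, iter j aG (EAs c) = sc (w ^+ (j * c)) (EAs c).
  elim=> [|j IH]; first by rewrite /= mul0n expr0 sc1.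
  by rewrite iterS IH (islin_sc islin_aG) aG_EAs scA -exprD mulSnr.
by rewrite -EA_ee -EAs_small // E exprM wn expr1n sc1.
Qed.

Lemma iter_aG_mod a m : iter (a %% n)%N aG m = iter a aG m.
Proof.
have E : forall q, iter (q * n)%N aG m = m.
  by elim=> [|q IH] //=; rewrite mulSn iterD iter_aG_n IH.
by rewrite [in RHS](divn_eq a n) addnC iterD E.
Qed.

Lemma iter_aX_EA (b c : nat) : (c < n)%N -> (c < b)%N -> iter b aX (EA c) = 0.
Proof.
elim: b c => [|b IH] c cn //= cb.
rewrite -iterS iterSr -EAs_small // aX_EAs.
case: c cn cb => [|c] cn cb; first by rewrite qn0 sc0 (islin_0 (islin_iter b islin_aX)).
rewrite (islin_sc (islin_iter b islin_aX)) /= EAs_small ?IH ?scr0 //; exact: ltnW.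
Qed.

Lemma iter_aX_ge (b : nat) m : (n <= b)%N -> iter b aX m = 0.
Proof.
move=> nb.
rewrite (lin_ext (islin_iter b islin_aX)) /Lf big1 // => c _.
by rewrite -EA_ee iter_aX_EA // ?scr0 // (leq_trans (ltn_ord c)).
Qed.

Lemma aX_aG m : aX (aG m) = sc w (aG (aX m)).
Proof.
have L1 : islin (fun m => aX (aG m)) := islin_comp islin_aG islin_aX.
have L2 : islin (fun m => sc w (aG (aX m))) := islin_scf w (islin_comp islin_aX islin_aG).
move: m; apply: (lin_eq L1 L2) => c /=.
rewrite -EA_ee -EAs_small // aG_EAs (islin_sc islin_aX) aX_EAs.
rewrite (islin_sc islin_aG) aG_EAs !scA.
case: (nat_of_ord c) => [|c'] /=; first by rewrite qn0 !mulr0 !mul0r !sc0.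
by rewrite exprS; congr sc; ring.
Qed.

Lemma iter_aX_aG a b m :
  iter b aX (iter a aG m) = sc (w ^+ (a * b)) (iter a aG (iter b aX m)).
Proof.
have XG : forall a m, aX (iter a aG m) = sc (w ^+ a) (iter a aG (aX m)).
  elim=> [|a1 IH] m1 /=; first by rewrite expr0 sc1.
  by rewrite aX_aG IH (islin_sc islin_aG) scA exprS.
elim: b m => [|b IH] m /=; first by rewrite muln0 expr0 sc1.
rewrite -iterS iterSr XG (islin_sc (islin_iter b islin_aX)) IH scA -exprD mulnS.
by rewrite -iterSr iterS.
Qed.

Lemma islin_act_h m : islin (fun h => act h m).
Proof.
split=> [c v|F].
  rewrite /Defs.act sc_sum; apply: eq_bigr => i _; rewrite sc_sum; apply: eq_bigr => j _.
  by rewrite scE scA mulrA.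
rewrite /Defs.act.
under eq_bigr do (under eq_bigr do rewrite sum_ffunE mulr_suml sc_suml).
under eq_bigr do rewrite exchange_big /=.
by rewrite exchange_big.
Qed.

Lemma islin_GX a b : islin (fun m => iter a aG (iter b aX m)).
Proof. exact: (islin_comp (islin_iter b islin_aX) (islin_iter a islin_aG)). Qed.

Lemma act_ee (i : IH n) m : act (ee i) m = iter i.1 aG (iter i.2 aX m).
Proof.
rewrite (lin_ext (islin_GX i.1 i.2) m).
rewrite /Defs.act /Lf (bigD1 i) //= [X in _ + X]big1 ?addr0.
  by apply: eq_bigr => c _; rewrite eeE eqxx mul1r EA_ee.
move=> j /negbTE ji; apply: big1 => c _; by rewrite eeE ji mul0r sc0.
Qed.

Lemma islin_act_m h : islin (act h).
Proof.
have E : forall m, act h m = Lf (fun i => act (ee i) m) h.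
  by move=> m; rewrite (lin_ext (islin_act_h m)).
split=> [c v|F].
  rewrite !E /Lf sc_sum; apply: eq_bigr => i _.
  by rewrite !act_ee (islin_sc (islin_GX _ _)) !scA mulrC.
rewrite E /Lf; under [RHS]eq_bigr do rewrite E /Lf.
rewrite exchange_big /=; apply: eq_bigr => i _; rewrite -sc_sum; congr sc.
by rewrite !act_ee (islin_sum (islin_GX _ _)); apply: eq_bigr => j _; rewrite act_ee.
Qed.

Lemma act_EH a b m : act (EH a b) m = iter a aG (iter b aX m).
Proof.
case: (ltnP b n) => Hb.
  have Ha := ltn_pmod a npos.
  by rewrite -EH_mod (EH_ee Ha Hb) act_ee /= iter_aG_mod.
rewrite EH_ge // (islin_0 (islin_act_h m)) iter_aX_ge //.
by rewrite (islin_0 (islin_iter a islin_aG)).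
Qed.

Lemma act1 m : act oH m = m.
Proof. by rewrite act_EH. Qed.

Lemma act_mul h h' m : act (mH h h') m = act h (act h' m).
Proof.
move: h h'.
apply: (bilin_eq (F := fun h h' => act (mH h h') m) (G := fun h h' => act h (act h' m))).
- move=> b; exact: (islin_comp (islin_mulBl _ b) (islin_act_h m)).
- move=> a; exact: (islin_comp (islin_mulBr _ a) (islin_act_h m)).
- move=> b; exact: (islin_act_h (act b m)).
- move=> a; split=> [c v|F].
    by rewrite (islin_sc (islin_act_h m)) (islin_sc (islin_act_m a)).
  by rewrite (islin_sum (islin_act_h m)) (islin_sum (islin_act_m a)).
move=> i j; rewrite -!EHi_ee /EHi mulH_EH (islin_sc (islin_act_h m)) !act_EH.
rewrite iter_aX_aG (islin_sc (islin_iter _ islin_aG)) -!iterD.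
by rewrite mulnC addnC.
Qed.

Lemma islin_mAl b : islin (fun a => mA a b).
Proof. exact: islin_mulBl. Qed.
Lemma islin_mAr a : islin (fun b => mA a b).
Proof. exact: islin_mulBr. Qed.
Lemma islin_mHAl b : islin (fun a => mHA a b).
Proof. exact: islin_mulBl. Qed.
Lemma islin_mHAr a : islin (fun b => mHA a b).
Proof. exact: islin_mulBr. Qed.
Lemma islin_mHl b : islin (fun a => mH a b).
Proof. exact: islin_mulBl. Qed.
Lemma islin_mHr a : islin (fun b => mH a b).
Proof. exact: islin_mulBr. Qed.

Lemma aX_mul a b : aX (mA a b) = mA (aX a) b + mA (aG a) (aX b).
Proof.
move: a b; apply: (bilin_eq (F := fun a b => aX (mA a b))
  (G := fun a b => mA (aX a) b + mA (aG a) (aX b))).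
- move=> b; exact: (islin_comp (islin_mAl b) islin_aX).
- move=> a; exact: (islin_comp (islin_mAr a) islin_aX).
- move=> b; apply: islin_addf.
    exact: (islin_comp islin_aX (islin_mAl b)).
  exact: (islin_comp islin_aG (islin_mAl (aX b))).
- move=> a; apply: islin_addf; first exact: islin_mAr.
  exact: (islin_comp islin_aX (islin_mAr (aG a))).
move=> i j /=; rewrite -!EA_ee -!EAs_small //.
rewrite mulA_EAs !aX_EAs aG_EAs.
rewrite (islin_sc (islin_mAl _)) (islin_sc (islin_mAl _)) mulA_EAs.
rewrite (islin_sc (islin_mAr _)) mulA_EAs scA.
rewrite qnD scDl.
case: (nat_of_ord i) => [|i'] /=.
  by rewrite qn0 !sc0 !add0r !add0n.
case: (nat_of_ord j) => [|j'] /=.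
  by rewrite qn0 !mulr0 !sc0 !addr0 addn0.
by rewrite addSn addnS.
Qed.

Lemma aG_mul a b : aG (mA a b) = mA (aG a) (aG b).
Proof.
move: a b; apply: (bilin_eq (F := fun a b => aG (mA a b))
  (G := fun a b => mA (aG a) (aG b))).
- move=> b; exact: (islin_comp (islin_mAl b) islin_aG).
- move=> a; exact: (islin_comp (islin_mAr a) islin_aG).
- move=> b; exact: (islin_comp islin_aG (islin_mAl (aG b))).
- move=> a; exact: (islin_comp islin_aG (islin_mAr (aG a))).
move=> i j /=; rewrite -!EA_ee -!EAs_small //.
rewrite mulA_EAs !aG_EAs (islin_sc (islin_mAl _)) (islin_sc (islin_mAr _)).
by rewrite mulA_EAs scA exprD.
Qed.

Local Notation HA := {ffun (IH n * 'I_n) -> k}.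

Definition Gam (b : H k n) (S : HA) : HA :=
  Lf (fun rc : (IH n * 'I_n) => tens (ee rc.1) (act b (ee rc.2))) S.

Lemma islin_Gam b : islin (Gam b).
Proof. exact: islin_Lf. Qed.

Lemma actxH m : act (xH k n) m = aX m.
Proof. by rewrite act_EH. Qed.
Lemma actgH m : act (gH k n) m = aG m.
Proof. by rewrite act_EH. Qed.

Lemma Gam_tens b (z : H k n) (y : A k n) : Gam b (tens z y) = tens z (act b y).
Proof.
move: z y; apply: (bilin_eq (F := fun z y => Gam b (tens z y))
  (G := fun z y => tens z (act b y))).
- move=> y /=; exact: (islin_comp (islin_tensl _ y) (islin_Gam b)).
- move=> z /=; exact: (islin_comp (islin_tensr _ z) (islin_Gam b)).
- move=> y /=; exact: (islin_tensl _ (act b y)).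
- move=> z /=; exact: (islin_comp (islin_act_m b) (islin_tensr _ z)).
by move=> i j /=; rewrite tens_ee /Gam Lf_ee.
Qed.

Lemma islin_Gam_b S : islin (fun b => Gam b S).
Proof.
split=> [c v|F].
  rewrite /Gam /Lf sc_sum; apply: eq_bigr => i _.
  by rewrite (islin_sc (islin_act_h _)) tens_scr !scA mulrC.
rewrite /Gam /Lf; under eq_bigr do rewrite (islin_sum (islin_act_h _)) tens_sumr sc_sum.
by rewrite exchange_big.
Qed.

Lemma Gam_lin_ext (g g' : HA -> HA) : islin g -> islin g' ->
  (forall (r : IH n) (c : 'I_n), g (tens (ee r) (ee c)) = g' (tens (ee r) (ee c))) ->
  forall S, g S = g' S.
Proof.
move=> L L' E; apply: (lin_eq L L') => [[r c]]; by rewrite -tens_ee E.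
Qed.

Lemma Gam_bilin_ext (F G : HA -> HA -> HA) :
  (forall b, islin (F ^~ b)) -> (forall a, islin (F a)) ->
  (forall b, islin (G ^~ b)) -> (forall a, islin (G a)) ->
  (forall (r r' : IH n) (c c' : 'I_n),
     F (tens (ee r) (ee c)) (tens (ee r') (ee c')) = G (tens (ee r) (ee c)) (tens (ee r') (ee c'))) ->
  forall S T, F S T = G S T.
Proof.
move=> F1 F2 G1 G2 E; apply: bilin_eq => // [[r c] [r' c']]; by rewrite -!tens_ee E.
Qed.

Lemma Gam_mulL b a S : Gam b (mHA (tens a oA) S) = mHA (tens a oA) (Gam b S).
Proof.
move: S; apply: Gam_lin_ext.
- exact: (islin_comp (islin_mHAr _) (islin_Gam b)).
- exact: (islin_comp (islin_Gam b) (islin_mHAr _)).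
by move=> r c /=; rewrite mulHA_tens !Gam_tens mulHA_tens !mul1A.
Qed.

Lemma Gam_mulR b z S : Gam b (mHA S (tens z oA)) = mHA (Gam b S) (tens z oA).
Proof.
move: S; apply: Gam_lin_ext.
- exact: (islin_comp (islin_mHAl _) (islin_Gam b)).
- exact: (islin_comp (islin_Gam b) (islin_mHAl _)).
by move=> r c /=; rewrite mulHA_tens !Gam_tens mulHA_tens !mulA1.
Qed.

Lemma Gam_comp b b' S : Gam (mH b b') S = Gam b (Gam b' S).
Proof.
move: S; apply: Gam_lin_ext.
- exact: islin_Gam.
- exact: (islin_comp (islin_Gam b') (islin_Gam b)).
by move=> r c /=; rewrite !Gam_tens act_mul.
Qed.

Lemma Gam_one S : Gam oH S = S.
Proof.
move: S; apply: Gam_lin_ext.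
- exact: islin_Gam.
- exact: (@islin_id k _).
by move=> r c /=; rewrite !Gam_tens act1.
Qed.

Lemma Gam_X_mul S T :
  Gam (xH k n) (mHA S T) = mHA (Gam (xH k n) S) T + mHA (Gam (gH k n) S) (Gam (xH k n) T).
Proof.
move: S T; apply: Gam_bilin_ext.
- move=> T; exact: (islin_comp (islin_mHAl T) (islin_Gam _)).
- move=> S; exact: (islin_comp (islin_mHAr S) (islin_Gam _)).
- move=> T; apply: islin_addf.
    exact: (islin_comp (islin_Gam _) (islin_mHAl T)).
  exact: (islin_comp (islin_Gam _) (islin_mHAl _)).
- move=> S; apply: islin_addf; first exact: islin_mHAr.
  exact: (islin_comp (islin_Gam _) (islin_mHAr _)).
move=> r r' c c' /=.
by rewrite mulHA_tens !Gam_tens !mulHA_tens !actxH !actgH aX_mul tens_addr.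
Qed.

Lemma Gam_G_mul S T :
  Gam (gH k n) (mHA S T) = mHA (Gam (gH k n) S) (Gam (gH k n) T).
Proof.
move: S T; apply: Gam_bilin_ext.
- move=> T; exact: (islin_comp (islin_mHAl T) (islin_Gam _)).
- move=> S; exact: (islin_comp (islin_mHAr S) (islin_Gam _)).
- move=> T; exact: (islin_comp (islin_Gam _) (islin_mHAl _)).
- move=> S; exact: (islin_comp (islin_Gam _) (islin_mHAr _)).
move=> r r' c c' /=.
by rewrite mulHA_tens !Gam_tens !mulHA_tens !actgH aG_mul.
Qed.

Local Notation HH := {ffun (IH n * IH n) -> k}.
Local Notation rho := (@Defs.rho k n w).

Definition opL (a b : H k n) (S : HA) : HA := mHA (tens a oA) (Gam b S).

Definition LT (T : HH) (S : HA) : HA :=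
  \sum_(pq : IH n * IH n) sc (T pq) (opL (EHi k pq.1) (EHi k pq.2) S).

Definition RT (T : HH) (m : A k n) : HA :=
  \sum_(pq : IH n * IH n) sc (T pq) (mHA (rho (act (EHi k pq.1) m)) (tens (EHi k pq.2) oA)).

Lemma islin_rho : islin rho.
Proof. exact: islin_Lf. Qed.

Lemma islin_opL_S a b : islin (opL a b).
Proof. exact: (islin_comp (islin_Gam b) (islin_mHAr _)). Qed.

Lemma islin_opL_a b S : islin (fun a => opL a b S).
Proof. exact: (islin_comp (islin_tensl _ oA) (islin_mHAl _)). Qed.

Lemma islin_opL_b a S : islin (fun b => opL a b S).
Proof. exact: (islin_comp (islin_Gam_b S) (islin_mHAr _)). Qed.

Lemma islin_LT_T S : islin (fun T => LT T S).
Proof. exact: islin_Lf. Qed.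

Lemma islin_LT_S T : islin (LT T).
Proof. apply: islin_sumf => pq; exact: islin_opL_S. Qed.

Lemma islin_RT_T m : islin (fun T => RT T m).
Proof. exact: islin_Lf. Qed.

Lemma islin_RT_m T : islin (RT T).
Proof.
apply: islin_sumf => pq.
exact: (islin_comp (islin_comp (islin_act_m _) islin_rho) (islin_mHAl _)).
Qed.

Lemma LT_tens a b S : LT (tens a b) S = opL a b S.
Proof.
move: a b; apply: (bilin_eq (F := fun a b => LT (tens a b) S) (G := fun a b => opL a b S)).
- move=> b /=; exact: (islin_comp (islin_tensl _ b) (islin_LT_T S)).
- move=> a /=; exact: (islin_comp (islin_tensr _ a) (islin_LT_T S)).
- move=> b; exact: islin_opL_a.
- move=> a; exact: islin_opL_b.
move=> p q /=; rewrite tens_ee /LT.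
by rewrite (sum_scee (fun pq : IH n * IH n => opL (EHi k pq.1) (EHi k pq.2) S)) /= !EHi_ee.
Qed.

Lemma mulA_oo : mA oA oA = oA.
Proof. exact: mul1A. Qed.

Lemma opL_comp a a' b b' S :
  opL (mH a a') (mH b b') S = opL a b (opL a' b' S).
Proof.
rewrite /opL Gam_comp Gam_mulL mulHA_assoc mulHA_tens mulA_oo //.
Qed.

Lemma LT_mul T T' S : LT (mHH T T') S = LT T (LT T' S).
Proof.
move: T T'; apply: (bilin_eq (F := fun T T' => LT (mHH T T') S) (G := fun T T' => LT T (LT T' S))).
- move=> T' /=; exact: (islin_comp (islin_mulBl _ T') (islin_LT_T S)).
- move=> T /=; exact: (islin_comp (islin_mulBr _ T) (islin_LT_T S)).
- move=> T'; exact: (islin_LT_T (LT T' S)).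
- move=> T /=; exact: (islin_comp (islin_LT_T S) (islin_LT_S T)).
move=> [p q] [p' q'] /=; rewrite -!tens_ee.
by rewrite mulHH_tens !LT_tens opL_comp.
Qed.

Lemma LT_mulR T S z : LT T (mHA S (tens z oA)) = mHA (LT T S) (tens z oA).
Proof.
rewrite /LT (islin_sum (islin_mHAl _)); apply: eq_bigr => pq _.
rewrite (islin_sc (islin_mHAl _)); congr sc.
by rewrite /opL Gam_mulR mulHA_assoc.
Qed.

Lemma RT_tens a b m : RT (tens a b) m = mHA (rho (act a m)) (tens b oA).
Proof.
move: a b; apply: (bilin_eq (F := fun a b => RT (tens a b) m)
  (G := fun a b => mHA (rho (act a m)) (tens b oA))).
- move=> b /=; exact: (islin_comp (islin_tensl _ b) (islin_RT_T m)).
- move=> a /=; exact: (islin_comp (islin_tensr _ a) (islin_RT_T m)).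
- move=> b /=; exact: (islin_comp (islin_comp (islin_act_h m) islin_rho) (islin_mHAl _)).
- move=> a /=; exact: (islin_comp (islin_tensl _ oA) (islin_mHAr _)).
move=> p q /=; rewrite tens_ee /RT.
by rewrite (sum_scee (fun pq : IH n * IH n => mHA (rho (act (EHi k pq.1) m)) (tens (EHi k pq.2) oA))) /= !EHi_ee.
Qed.

Lemma RT_mul T T' m : RT (mHH T T') m =
  \sum_(pq : IH n * IH n) sc (T' pq) (mHA (RT T (act (EHi k pq.1) m)) (tens (EHi k pq.2) oA)).
Proof.
move: T T'; apply: (bilin_eq (F := fun T T' => RT (mHH T T') m)
  (G := fun T T' => \sum_(pq : IH n * IH n) sc (T' pq) (mHA (RT T (act (EHi k pq.1) m)) (tens (EHi k pq.2) oA)))).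
- move=> T' /=; exact: (islin_comp (islin_mulBl _ T') (islin_RT_T m)).
- move=> T /=; exact: (islin_comp (islin_mulBr _ T) (islin_RT_T m)).
- move=> T' /=; apply: islin_sumf => pq.
  exact: (islin_comp (islin_RT_T _) (islin_mHAl _)).
- move=> T /=; exact: islin_Lf.
move=> [p q] [p' q'] /=; rewrite -!tens_ee.
rewrite mulHH_tens RT_tens tens_ee.
rewrite (sum_scee (fun pq : IH n * IH n => mHA (RT (tens (ee p) (ee q)) (act (EHi k pq.1) m)) (tens (EHi k pq.2) oA))) /=.
rewrite RT_tens !EHi_ee act_mul -mulHA_assoc mulHA_tens mulA_oo //.
Qed.

Definition Nn (i : nat) : nat := ((n - 1) * i.+1)%N.
Definition cc (i : nat) : k := coef_a w i * w ^+ (i * Nn i).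

Lemma half_step i : ((i.+1 * i.+2)./2 = (i * i.+1)./2 + i.+1)%N.
Proof.
have -> : (i.+1 * i.+2 = i * i.+1 + (i.+1).*2)%N by rewrite -mul2n; ring.
by rewrite halfD odd_double andbF add0n doubleK.
Qed.

Lemma coef_id i : cc i * w ^+ (Nn i) + cc i.+1 * qn i.+2 = w * cc i.
Proof.
rewrite /cc /coef_a.
have Z : w ^+ i.+1 * w ^+ (Nn i) = 1.
  rewrite -exprD /Nn.
  have -> : (i.+1 + (n - 1) * i.+1 = n * i.+1)%N.
    by rewrite -{1}(mul1n i.+1) -mulnDl subnKC // ltnW.
  by rewrite exprM wn expr1n.
have E1 : w ^+ (i * Nn i) = (w ^+ Nn i) ^+ i by rewrite mulnC exprM.
have E2 : w ^+ (i.+1 * Nn i.+1) = (w ^+ Nn i) ^+ i.+2.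
  rewrite -exprM /Nn; congr (w ^+ _); ring.
have E3 : w ^+ ((i.+1 * i.+2)./2) = w ^+ ((i * i.+1)./2) * w ^+ i.+1.
  by rewrite half_step exprD.
have Hq : (w - 1) * qn i.+2 = w ^+ i.+1 * w - 1.
  by rewrite /qn -subrX1 exprSr.
rewrite E1 E2 E3 exprSr.
move: Z Hq; set a := w ^+ i.+1; set b := w ^+ Nn i; set q := qn i.+2.
set P := (w - 1) ^+ i; set T := w ^+ ((i * i.+1)./2) => Z Hq.
have -> : P * T * b ^+ i * b + P * (w - 1) * (T * a) * b ^+ i.+2 * q =
          P * T * b ^+ i * (b + a * b * b * ((w - 1) * q)).
  by rewrite !exprS; ring.
rewrite Hq.
have -> : b + a * b * b * (a * w - 1) = b * (1 - a * b) + (a * b) * (a * b) * w by ring.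
by rewrite Z subrr mulr0 add0r !mul1r; ring.
Qed.

Definition M (a b s : nat) : HA := tens (EH a b) (EAs s).
Local Notation Gg := (tens (gH k n) oA).
Local Notation Xx := (tens (xH k n) oA).
Local Notation gam := (Gam (gH k n)).
Local Notation dX := (Gam (xH k n)).

Lemma powH_x i : powH w (xH k n) i = EH 0 i.
Proof.
elim: i => [|i IH] //.
have -> : powH w (xH k n) i.+1 = mH (xH k n) (powH w (xH k n) i) by [].
by rewrite IH /xH mulH_EH mul1n expr0 sc1 add0n add1n.
Qed.

Lemma powH_ginv j : powH w (ginvH k n) j = EH ((n - 1) * j) 0.
Proof.
elim: j => [|j IH]; first by rewrite muln0.
have -> : powH w (ginvH k n) j.+1 = mH (ginvH k n) (powH w (ginvH k n) j) by [].
by rewrite IH /ginvH mulH_EH mul0n expr0 sc1 mulnS.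
Qed.

Lemma powA_u j : powA w (uA k n) j = EAs j.
Proof.
elim: j => [|j IH]; first by rewrite -oA_EAs.
have -> : powA w (uA k n) j.+1 = mA (uA k n) (powA w (uA k n) j) by [].
by rewrite IH /uA -EAs_small // mulA_EAs.
Qed.

Lemma rhou_E : rhou n w = \sum_(i < n) sc (cc i) (M (Nn i) i i.+1).
Proof.
rewrite /rhou; apply: eq_bigr => i _.
rewrite powH_x powH_ginv powA_u mulH_EH tens_scl scA.
by rewrite /cc /M /Nn ?add0n ?addn0.
Qed.

Lemma Gg_M a b s : mHA Gg (M a b s) = M (1 + a) b s.
Proof. by rewrite /M mulHA_tens /gH mulH_EH mul0n expr0 sc1 add0n mul1A. Qed.

Lemma M_Gg a b s : mHA (M a b s) Gg = sc (w ^+ b) (M (a + 1) b s).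
Proof. by rewrite /M mulHA_tens /gH mulH_EH muln1 addn0 mulA1 tens_scl. Qed.

Lemma Xx_M a b s : mHA Xx (M a b s) = sc (w ^+ a) (M a (1 + b) s).
Proof. by rewrite /M mulHA_tens /xH mulH_EH mul1n add0n mul1A tens_scl. Qed.

Lemma M_Xx a b s : mHA (M a b s) Xx = M a (b + 1) s.
Proof. by rewrite /M mulHA_tens /xH mulH_EH muln0 expr0 sc1 addn0 mulA1. Qed.

Lemma gam_M a b s : gam (M a b s) = sc (w ^+ s) (M a b s).
Proof. by rewrite /M Gam_tens actgH aG_EAs tens_scr. Qed.

Lemma dX_M a b s : dX (M a b s) = sc (qn s) (M a b (s.-1)%N).
Proof. by rewrite /M Gam_tens actxH aX_EAs tens_scr. Qed.

Lemma R1 : mHA Gg (gam (rhou n w)) = sc w (mHA (rhou n w) Gg).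
Proof.
rewrite rhou_E (islin_sum (islin_Gam _)) (islin_sum (islin_mHAr _)).
rewrite (islin_sum (islin_mHAl _)) sc_sum; apply: eq_bigr => i _.
rewrite (islin_sc (islin_Gam _)) (islin_sc (islin_mHAr _)) (islin_sc (islin_mHAl _)).
rewrite gam_M (islin_sc (islin_mHAr _)) Gg_M M_Gg !scA addnC exprS.
by congr sc; ring.
Qed.

Definition ff (i : nat) : HA := sc (cc i * qn i.+1) (M (1 + Nn i) i i).

Lemma ff_n : ff n = 0.
Proof. by rewrite /ff /M EH_ge // tens_0l scr0. Qed.

Lemma ff_0 : ff 0 = oneHA k n.
Proof.
rewrite /ff /cc /coef_a /= qnS qn0 mulr0 addr0 !expr0 !mulr1.
have -> : (1 + Nn 0 = n)%N by rewrite /Nn; have := n_gt1; lia.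
rewrite sc1 /M /oneHA -oA_EAs; congr tens.
by rewrite /oneH -EH_mod modnn.
Qed.

Lemma sc_sub (I : finType) a b (v : {ffun I -> k}) : sc a v - sc b v = sc (a - b) v.
Proof. by rewrite -scNl -scDl. Qed.

Lemma R2 : mHA Xx (rhou n w) + mHA Gg (dX (rhou n w)) = oneHA k n + sc w (mHA (rhou n w) Xx).
Proof.
rewrite rhou_E.
rewrite (islin_sum (islin_mHAr _)) (islin_sum (islin_Gam _)) (islin_sum (islin_mHAr _)).
rewrite (islin_sum (islin_mHAl _)) sc_sum.
have EA : forall i : 'I_n, mHA Xx (sc (cc i) (M (Nn i) i i.+1)) =
    sc w (mHA (sc (cc i) (M (Nn i) i i.+1)) Xx) - ff i.+1.
  move=> i; rewrite (islin_sc (islin_mHAr _)) (islin_sc (islin_mHAl _)) Xx_M M_Xx !scA.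
  rewrite /ff addn1 add1n.
  have -> : M (1 + Nn i.+1) i.+1 i.+1 = M (Nn i) i.+1 i.+1.
    rewrite /M; congr tens; apply: EH_modE; rewrite /Nn.
    have -> : (1 + (n - 1) * i.+2 = (n - 1) * i.+1 + n)%N.
      by rewrite mulnS; have := n_gt1; lia.
    by rewrite modnDr.
  rewrite sc_sub; congr sc.
  have := coef_id i; rewrite mulrC => <-.
  by rewrite addrK.
have EB : forall i : 'I_n, mHA Gg (dX (sc (cc i) (M (Nn i) i i.+1))) = ff i.
  by move=> i; rewrite (islin_sc (islin_Gam _)) (islin_sc (islin_mHAr _)) dX_M
     (islin_sc (islin_mHAr _)) Gg_M scA /ff.
under eq_bigr do rewrite EA.
under [X in _ + X = _]eq_bigr do rewrite EB.
have Tel : \sum_(i < n) (ff i - ff i.+1) = oneHA k n.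
  have := telescope_sumr ff (leq0n n); rewrite big_mkord => H.
  rewrite -[LHS]opprK -sumrN.
  under eq_bigr do rewrite opprB.
  by rewrite H ff_n ff_0 sub0r opprK.
rewrite sumrB -addrA addrC -Tel sumrB; congr (_ + _).
by rewrite addrC.
Qed.

Local Notation rh := (fun c => powHA w (rhou n w) c).

Lemma rh_S c : rh c.+1 = mHA (rhou n w) (rh c).
Proof. by []. Qed.

Lemma rh_0 : rh 0 = oneHA k n.
Proof. by []. Qed.

Lemma gam_one : gam (oneHA k n) = oneHA k n.
Proof. by rewrite /oneHA Gam_tens actgH aG_EA0. Qed.

Lemma dX_one : dX (oneHA k n) = 0.
Proof. by rewrite /oneHA Gam_tens actxH aX_EA0 tens_0r. Qed.

Lemma R3 c : mHA Gg (gam (rh c)) = sc (w ^+ c) (mHA (rh c) Gg).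
Proof.
elim: c => [|c IH].
  by rewrite rh_0 gam_one mulHA1 mul1HA expr0 sc1.
rewrite rh_S Gam_G_mul mulHA_assoc R1 (islin_sc (islin_mHAl _)) -mulHA_assoc IH.
by rewrite (islin_sc (islin_mHAr _)) scA mulHA_assoc exprS.
Qed.

Lemma R4 c : mHA Xx (rh c) + mHA Gg (dX (rh c)) =
  sc (qn c) (rh (c.-1)%N) + sc (w ^+ c) (mHA (rh c) Xx).
Proof.
elim: c => [|c IH].
  by rewrite rh_0 dX_one (islin_0 (islin_mHAr _)) addr0 qn0 sc0 add0r expr0 sc1
    mulHA1 mul1HA.
have IH' : mHA Gg (dX (rh c)) = sc (qn c) (rh (c.-1)%N) + sc (w ^+ c) (mHA (rh c) Xx) - mHA Xx (rh c).
  by rewrite -IH (addrC (mHA Xx _)) addrK.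
have E1 : mHA (rhou n w) (sc (qn c) (rh (c.-1)%N)) = sc (qn c) (rh c).
  case: c {IH IH'} => [|c]; first by rewrite qn0 !sc0 (islin_0 (islin_mHAr _)).
  by rewrite (islin_sc (islin_mHAr _)).
rewrite rh_S Gam_X_mul (islin_add (islin_mHAr _)) !mulHA_assoc R1.
rewrite addrA -(islin_add (islin_mHAl _)) R2.
rewrite (islin_add (islin_mHAl _)) mul1HA !(islin_sc (islin_mHAl _)) -!mulHA_assoc IH'.
rewrite (islin_sub (islin_mHAr _)) (islin_add (islin_mHAr _)) E1.
rewrite !(islin_sc (islin_mHAr _)) !mulHA_assoc /=.
set P := mHA (mHA (rhou n w) Xx) (rh c).
set Q := mHA (mHA (rhou n w) (rh c)) Xx.
rewrite qnS scDl sc1 exprS -scA.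
rewrite scDr scNr scDr !scA.
set a := sc (w * qn c) (rh c); set b := sc (w * w ^+ c) Q; set p := sc w P.
rewrite -!addrA; congr (_ + _); rewrite addrCA; congr (_ + _).
by rewrite addrC subrK.
Qed.

Definition QQ (T : HH) := forall m, LT T (rho m) = RT T m.

Lemma rho_ee (c : 'I_n) : rho (ee c) = rh c.
Proof. exact: Lf_ee. Qed.

Lemma rho_EA j : (j < n)%N -> rho (EA j) = rh j.
Proof. by move=> Hj; rewrite (EA_ee (Ordinal Hj)) rho_ee. Qed.

Lemma QQ_base T : (forall c : 'I_n, LT T (rho (ee c)) = RT T (ee c)) -> QQ T.
Proof.
move=> E; apply: (lin_eq (g := fun m => LT T (rho m)) (g' := RT T)) => //.
  exact: (islin_comp islin_rho (islin_LT_S T)).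
exact: islin_RT_m.
Qed.

Lemma QQ_mul T T' : QQ T -> QQ T' -> QQ (mHH T T').
Proof.
move=> QT QT' m.
rewrite LT_mul QT' RT_mul [RT T' m]/RT (islin_sum (islin_LT_S T)); apply: eq_bigr => pq _.
by rewrite (islin_sc (islin_LT_S T)) LT_mulR QT.
Qed.

Lemma QQ_one : QQ (oneHH k n).
Proof.
move=> m; rewrite /oneHH LT_tens RT_tens /opL Gam_one act1.
by rewrite -/(oneHA k n) mul1HA mulHA1.
Qed.

Lemma QQ_pow v j : QQ v -> QQ (powHH w v j).
Proof.
move=> Qv; elim: j => [|j IH]; first exact: QQ_one.
have -> : powHH w v j.+1 = mHH v (powHH w v j) by [].
exact: QQ_mul.
Qed.

Lemma QQ_g : QQ (tens (gH k n) (gH k n)).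
Proof.
apply: QQ_base => c; rewrite LT_tens RT_tens /opL actgH rho_ee.
rewrite -EA_ee -EAs_small // aG_EAs EAs_small // (islin_sc islin_rho) rho_EA //.
by rewrite R3 (islin_sc (islin_mHAl _)).
Qed.

Lemma QQ_x : QQ (tens (xH k n) oH + tens (gH k n) (xH k n)).
Proof.
apply: QQ_base => c.
rewrite (islin_add (islin_LT_T _)) (islin_add (islin_RT_T _)) !LT_tens !RT_tens /opL.
rewrite Gam_one actxH actgH rho_ee -/(oneHA k n) mulHA1.
rewrite R4 -EA_ee -EAs_small // aX_EAs aG_EAs.
have Hc : ((c.-1)%N < n)%N by rewrite (leq_ltn_trans (leq_pred _)).
rewrite EAs_small // EAs_small // !(islin_sc islin_rho) !rho_EA //.
by rewrite (islin_sc (islin_mHAl _)).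
Qed.

Lemma QQ_DeltaB i : QQ (DeltaB w i).
Proof.
apply: QQ_mul; apply: QQ_pow; [exact: QQ_g | exact: QQ_x].
Qed.

Lemma Y1 (h : H k n) (m : A k n) : YD_lhs w h m = LT (Delta w h) (rho m).
Proof.
rewrite /YD_lhs /LT; apply: eq_bigr => pq _.
rewrite /opL /Gam /Lf (islin_sum (islin_mHAr _)) sc_sum; apply: eq_bigr => rc _.
rewrite (islin_sc (islin_mHAr _)) mulHA_tens mul1A scA -(EHi_ee rc.1) -(EA_ee rc.2).
by [].
Qed.

Lemma Y2 (h : H k n) (m : A k n) : YD_rhs w h m = RT (Delta w h) m.
Proof.
rewrite /YD_rhs /RT; apply: eq_bigr => pq _; congr sc.
rewrite (lin_ext (islin_mHAl _)) /Lf; apply: eq_bigr => [[r c]] _ /=; congr sc.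
by rewrite -tens_ee mulHA_tens mulA1 -(EHi_ee r) -(EA_ee c).
Qed.

Theorem main (h : H k n) (m : A k n) : YD_lhs w h m = YD_rhs w h m.
Proof.
rewrite Y1 Y2 /Delta (islin_sum (islin_LT_T _)) (islin_sum (islin_RT_T _)).
apply: eq_bigr => i _.
by rewrite (islin_sc (islin_LT_T _)) (islin_sc (islin_RT_T _)) QQ_DeltaB.
Qed.

End Taft.


Theorem proposition5p3 (k : fieldType) (n : nat) (w : k) :
  [pchar k] =i pred0 ->
  (1 < n)%N ->
  n.-primitive_root w ->
  forall (h : H k n) (m : A k n), YD_lhs w h m = YD_rhs w h m.
Proof.
move=> _ n1 Hprim h m.
have wn := prim_expr_order Hprim.
have w1 : w != 1.
  apply/eqP => E; have := prim_order_dvd Hprim 1.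
  rewrite E expr1 eqxx dvdn1 => /eqP n1'.
  by rewrite n1' in n1.
have qs : \sum_(j < n) w ^+ j = 0.
  have := subrX1 w n; rewrite wn subrr => /esym/eqP.
  by rewrite mulf_eq0 subr_eq0 (negbTE w1) /= => /eqP.
exact: (main n1 wn qs).
Qed.
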